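(* Let $\mathcal K$ be a finitely complete 2-category with a good yoneda structure. Let $A$ be an admissible object, $f:A\to C$ and $g:A\to B$ admissible 1-cells, $h:B\to C$ a 1-cell, $\phi:f\Rightarrow hg$ a 2-cell, and $\phi':B(g,1)\Rightarrow C(f,1)h$ the corresponding 2-cell (the unique one with $(C(f,1)\phi)\cdot\chi^f=(\phi'g)\cdot\chi^g$). Then: (1) $\phi$ exhibits $h$ as a left extension of $f$ along $g$ iff $\phi'$ exhibits $h$ as a left lifting of $B(g,1)$ along $C(f,1)$; (2) $\phi$ exhibits $h$ as a pointwise left extension of $f$ along $g$ iff $\phi'$ exhibits $h$ as an absolute left lifting of $B(g,1)$ along $C(f,1)$; (3) $\phi$ exhibits $g$ as an absolute left lifting of $f$ along $h$ iff $\phi'$ is an isomorphism.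
   Context: For $f:A\to B$, $g:C\to B$ the lax pullback $f/g$ has projections $p:f/g\to A$, $q:f/g\to C$ and universal 2-cell $\lambda:fp\Rightarrow gq$. Given $f:A\to C$, $g:A\to B$, $h:B\to C$, a 2-cell $\phi:f\Rightarrow hg$ exhibits $h$ as a left extension of $f$ along $g$ if for every $k:B\to C$, $\kappa\mapsto(\kappa g)\cdot\phi$ is a bijection from 2-cells $h\Rightarrow k$ to 2-cells $f\Rightarrow kg$; it exhibits $g$ as a left lifting of $f$ along (through) $h$ if for every $k:A\to B$, $\kappa\mapsto(h\kappa)\cdot\phi$ is a bijection from 2-cells $g\Rightarrow k$ to 2-cells $f\Rightarrow hk$; the lifting is absolute if $\phi j$ exhibits $gj$ as a left lifting of $fj$ along $h$ for all $j:D\to A$. $\phi$ exhibits $h$ as a pointwise left extension of $f$ along $g$ if for every $c:X\to B$, with lax pullback $p:g/c\to A$, $q:g/c\to X$, $\lambda:gp\Rightarrow cq$, the 2-cell $(h\lambda)\cdot(\phi p)$ exhibits $hc$ as a left extension of $fp$ along $q$. A good yoneda structure: a class of admissible 1-cells with $fg$ admissible whenever $f$ is; $A$ admissible when $1_A$ is; for admissible $A$ an object $\mathcal PA$ and admissible $y_A:A\to\mathcal PA$; for $f:A\to B$ with $A$, $f$ admissible a 1-cell $B(f,1):B\to\mathcal PA$ and a 2-cell $\chi^f:y_A\Rightarrow B(f,1)f$; such that (i) $\chi^f$ exhibits $f$ as an absolute left lifting of $y_A$ through $B(f,1)$; (ii) if $A$, $f:A\to B$ admissible and $\psi:y_A\Rightarrow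 kf$ exhibits $f$ as an absolute left lifting of $y_A$ along $k$, then $\psi$ exhibits $k$ as a pointwise left extension of $y_A$ along $f$. In this setting $\chi^g$ exhibits $B(g,1)$ as a left extension of $y_A$ along $g$, so $\phi\mapsto\phi'$ (defined by the equation in the claim) is a well-defined bijection between 2-cells $f\Rightarrow hg$ and 2-cells $B(g,1)\Rightarrow C(f,1)h$. *)

(* Defs.v *)
From mathcomp Require Import ssreflect ssrfun ssrbool.


Definition castc {T : Type} (c : T -> T -> Type) {f f' g g' : T}
  (e1 : f = f') (e2 : g = g') (a : c f g) : c f' g' :=
  match e1 in _ = x, e2 in _ = y return c x y with eq_refl, eq_refl => a end.
Arguments castc {T} c {f f' g g'} e1 e2 a.

(* Data of a strict 2-category; comp1 g f = "g f" (apply f first). *)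
Record TwoCatData := {
  ob : Type;
  hom : ob -> ob -> Type;
  cell : forall {A B : ob}, hom A B -> hom A B -> Type;
  id1 : forall A : ob, hom A A;
  comp1 : forall {A B C : ob}, hom B C -> hom A B -> hom A C;
  id2 : forall {A B : ob} (f : hom A B), cell f f;
  vcomp : forall {A B : ob} {f g k : hom A B}, cell g k -> cell f g -> cell f k;
  hcomp : forall {A B C : ob} {f f' : hom B C} {g g' : hom A B},
      cell f f' -> cell g g' -> cell (comp1 f g) (comp1 f' g');
  comp1A : forall {A B C D : ob} (h : hom C D) (g : hom B C) (f : hom A B),
      comp1 h (comp1 g f) = comp1 (comp1 h g) f;
  comp1_idl : forall {A B : ob} (f : hom A B), comp1 (id1 B) f = f;
  comp1_idr : forall {A B : ob} (f : hom A B), comp1 f (id1 A) = f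
}.

Arguments id1 {t} A.
Arguments cell {t A B} _ _.
Arguments comp1 {t A B C} _ _.
Arguments id2 {t A B} f.
Arguments vcomp {t A B f g k} _ _.
Arguments hcomp {t A B C f f' g g'} _ _.
Arguments comp1A {t A B C D} h g f.
Arguments comp1_idl {t A B} f.
Arguments comp1_idr {t A B} f.
Arguments hom t _ _ : clear implicits.

Section TwoCat.
Context {K : TwoCatData}.

Definition is_2cat : Prop :=
  (forall A B (f g k l : hom K A B) (c : cell k l) (b : cell g k) (a : cell f g),
      vcomp c (vcomp b a) = vcomp (vcomp c b) a) /\
  (forall A B (f g : hom K A B) (a : cell f g), vcomp (id2 g) a = a) /\
  (forall A B (f g : hom K A B) (a : cell f g), vcomp a (id2 f) = a) /\
  (forall A B C (f : hom K B C) (g : hom K A B), hcomp (id2 f) (id2 g) = id2 (comp1 f g)) /\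
  (forall A B C (f f' f'' : hom K B C) (g g' g'' : hom K A B)
      (a : cell f f') (a' : cell f' f'') (b : cell g g') (b' : cell g' g''),
      hcomp (vcomp a' a) (vcomp b' b) = vcomp (hcomp a' b') (hcomp a b)) /\
  (forall A B C D (h h' : hom K C D) (g g' : hom K B C) (f f' : hom K A B)
      (c : cell h h') (b : cell g g') (a : cell f f'),
      castc (@cell K A D) (comp1A h g f) (comp1A h' g' f') (hcomp c (hcomp b a))
      = hcomp (hcomp c b) a) /\
  (forall A B (f f' : hom K A B) (a : cell f f'),
      castc (@cell K A B) (comp1_idl f) (comp1_idl f') (hcomp (id2 (id1 B)) a) = a) /\
  (forall A B (f f' : hom K A B) (a : cell f f'),
      castc (@cell K A B) (comp1_idr f) (comp1_idr f') (hcomp a (id2 (id1 A))) = a).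

(* whiskering: wl h a = "h a", wr a g = "a g" *)
Definition wl {A B C} (h : hom K B C) {f f' : hom K A B} (a : cell f f')
  : cell (comp1 h f) (comp1 h f') := hcomp (id2 h) a.
Definition wr {A B C} {f f' : hom K B C} (a : cell f f') (g : hom K A B)
  : cell (comp1 f g) (comp1 f' g) := hcomp a (id2 g).

Definition is_iso {A B} {f g : hom K A B} (a : cell f g) : Prop :=
  exists b : cell g f, vcomp b a = id2 f /\ vcomp a b = id2 g.

Definition is_left_ext {A B C} (f : hom K A C) (g : hom K A B) (h : hom K B C)
  (phi : cell f (comp1 h g)) : Prop :=
  forall k : hom K B C, bijective (fun kappa : cell h k => vcomp (wr kappa g) phi).

Definition is_left_lifting {A B C} (f : hom K A C) (h : hom K B C) (g : hom K A B)
  (phi : cell f (comp1 h g)) : Prop :=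
  forall k : hom K A B, bijective (fun kappa : cell g k => vcomp (wl h kappa) phi).

Definition is_abs_left_lifting {A B C} (f : hom K A C) (h : hom K B C) (g : hom K A B)
  (phi : cell f (comp1 h g)) : Prop :=
  forall D (j : hom K D A),
    is_left_lifting (comp1 f j) h (comp1 g j)
      (castc (@cell K D C) erefl (esym (comp1A h g j)) (wr phi j)).

(* lax pullback (comma object) of f : A -> B and g : C -> B,
   with strict 2-dimensional universal property *)
Definition comma_at {A B C P X} (f : hom K A B) (g : hom K C B)
  (p : hom K P A) (q : hom K P C) (lam : cell (comp1 f p) (comp1 g q)) (m : hom K X P)
  : cell (comp1 f (comp1 p m)) (comp1 g (comp1 q m)) :=
  castc (@cell K X B) (esym (comp1A f p m)) (esym (comp1A g q m)) (wr lam m).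

Definition is_comma {A B C P} (f : hom K A B) (g : hom K C B)
  (p : hom K P A) (q : hom K P C) (lam : cell (comp1 f p) (comp1 g q)) : Prop :=
  (forall X (r : hom K X A) (s : hom K X C) (mu : cell (comp1 f r) (comp1 g s)),
     let factors (m : hom K X P) :=
       exists (e1 : comp1 p m = r) (e2 : comp1 q m = s),
         castc (@cell K X B) (f_equal (comp1 f) e1) (f_equal (comp1 g) e2)
           (comma_at f g p q lam m) = mu in
     exists m, factors m /\ forall m', factors m' -> m' = m) /\
  (forall X (m m' : hom K X P) (a : cell (comp1 p m) (comp1 p m'))
          (b : cell (comp1 q m) (comp1 q m')),
     vcomp (wl g b) (comma_at f g p q lam m) = vcomp (comma_at f g p q lam m') (wl f a) ->
     exists! d : cell m m', wl p d = a /\ wl q d = b).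

Definition pb_eq {A B C P X} (f : hom K A C) (g : hom K B C)
  (p : hom K P A) (q : hom K P B) (e : comp1 f p = comp1 g q) (m : hom K X P)
  : comp1 f (comp1 p m) = comp1 g (comp1 q m) :=
  eq_trans (comp1A f p m)
    (eq_trans (f_equal (fun t => comp1 t m) e) (esym (comp1A g q m))).

Definition is_pullback {A B C P} (f : hom K A C) (g : hom K B C)
  (p : hom K P A) (q : hom K P B) (e : comp1 f p = comp1 g q) : Prop :=
  (forall X (r : hom K X A) (s : hom K X B), comp1 f r = comp1 g s ->
     exists! m : hom K X P, comp1 p m = r /\ comp1 q m = s) /\
  (forall X (m m' : hom K X P) (a : cell (comp1 p m) (comp1 p m'))
          (b : cell (comp1 q m) (comp1 q m')),
     castc (@cell K X C) (pb_eq f g p q e m) (pb_eq f g p q e m') (wl f a) = wl g b ->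
     exists! d : cell m m', wl p d = a /\ wl q d = b).

Definition is_terminal (T : ob K) : Prop :=
  forall X, (exists! t : hom K X T, True) /\
            (forall (t t' : hom K X T) (a b : cell t t'), a = b).

(* finite completeness: terminal object, pullbacks and comma objects
   (equivalently: all finite 2-limits) *)
Definition finitely_complete : Prop :=
  (exists T, is_terminal T) /\
  (forall A B C (f : hom K A C) (g : hom K B C),
     exists P (p : hom K P A) (q : hom K P B) (e : comp1 f p = comp1 g q),
       is_pullback f g p q e) /\
  (forall A B C (f : hom K A B) (g : hom K C B),
     exists P (p : hom K P A) (q : hom K P C) (lam : cell (comp1 f p) (comp1 g q)),
       is_comma f g p q lam).

Definition is_pointwise_left_ext {A B C} (f : hom K A C) (g : hom K A B) (h : hom K B C)
  (phi : cell f (comp1 h g)) : Prop :=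
  forall X (c : hom K X B) P (p : hom K P A) (q : hom K P X)
         (lam : cell (comp1 g p) (comp1 c q)),
    is_comma g c p q lam ->
    is_left_ext (comp1 f p) q (comp1 h c)
      (castc (@cell K P C) erefl (comp1A h c q)
         (vcomp (wl h lam) (castc (@cell K P C) erefl (esym (comp1A h g p)) (wr phi p)))).

End TwoCat.
Arguments is_2cat K : clear implicits.
Arguments finitely_complete K : clear implicits.

(* Data of a yoneda structure on K.  Pre A = "P A"; yon A = y_A;
   Bf1 f hA hf = B(f,1), defined for admissible A and f; chi = chi^f. *)
Record YonedaData (K : TwoCatData) := {
  adm : forall {A B : ob K}, hom K A B -> Prop;
  Pre : ob K -> ob K;
  yon : forall A : ob K, hom K A (Pre A);
  Bf1 : forall {A B : ob K} (f : hom K A B), adm (id1 A) -> adm f -> hom K B (Pre A);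
  chi : forall {A B : ob K} (f : hom K A B) (hA : adm (id1 A)) (hf : adm f),
      cell (yon A) (comp1 (Bf1 f hA hf) f)
}.

Arguments adm {K} y {A B} _.
Arguments Pre {K} y _.
Arguments yon {K} y A.
Arguments Bf1 {K} y {A B} f _ _.
Arguments chi {K} y {A B} f hA hf.

Definition is_good_yoneda {K : TwoCatData} (Y : YonedaData K) : Prop :=
  (forall A B C (f : hom K B C) (g : hom K A B), adm Y f -> adm Y (comp1 f g)) /\
  (forall A, adm Y (id1 A) -> adm Y (yon Y A)) /\
  (forall A B (f : hom K A B) (hA : adm Y (id1 A)) (hf : adm Y f),
     is_abs_left_lifting (yon Y A) (Bf1 Y f hA hf) f (chi Y f hA hf)) /\
  (forall A B (f : hom K A B), adm Y (id1 A) -> adm Y f ->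
     forall (k : hom K B (Pre Y A)) (psi : cell (yon Y A) (comp1 k f)),
       is_abs_left_lifting (yon Y A) k f psi ->
       is_pointwise_left_ext (yon Y A) f k psi).

(* Main.v *)
Require Import Defs.
From mathcomp Require Import ssreflect ssrfun ssrbool.
From Stdlib Require Import ProofIrrelevance.

Section Basics.
Context {K : TwoCatData}.

Definition ceq {A B : ob K} {f g f' g' : hom K A B} (a : cell f g) (b : cell f' g') : Prop :=
  exists (e1 : f = f') (e2 : g = g'), castc (@cell K A B) e1 e2 a = b.

Local Infix "~~" := ceq (at level 70).

Lemma cR {A B} {f g : hom K A B} (a : cell f g) : a ~~ a.
Proof. by exists erefl, erefl. Qed.

Lemma cS {A B} {f g f' g' : hom K A B} (a : cell f g) (b : cell f' g') : a ~~ b -> b ~~ a.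
Proof. move=> [e1 [e2 H]]. destruct e1, e2. subst. by exists erefl, erefl. Qed.

Lemma cT {A B} {f g f' g' f'' g'' : hom K A B} (a : cell f g) (b : cell f' g') (c : cell f'' g'') :
  a ~~ b -> b ~~ c -> a ~~ c.
Proof. move=> [e1 [e2 H]] [e3 [e4 H']]. destruct e1, e2, e3, e4. subst. by exists erefl, erefl. Qed.

Lemma c_eq {A B} {f g : hom K A B} (a b : cell f g) : a ~~ b -> a = b.
Proof.
move=> [e1 [e2 H]]. rewrite (proof_irrelevance _ e1 erefl) (proof_irrelevance _ e2 erefl) in H.
exact H.
Qed.

Lemma cTm {A B} {f g f' g' f'' g'' : hom K A B} (a : cell f g) (b : cell f' g') (c : cell f'' g'') :
  a ~~ b -> b ~~ c -> a ~~ c.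
Proof. move=> [e1 [e2 H]] [e3 [e4 H']]. destruct e1, e2, e3, e4. subst. by exists erefl, erefl. Qed.

Lemma eq_c {A B} {f g : hom K A B} (a b : cell f g) : a = b -> a ~~ b.
Proof. by move=> ->; apply cR. Qed.

Lemma castc_c {A B} {f g f' g' : hom K A B} (e1 : f = f') (e2 : g = g') (a : cell f g) :
  castc (@cell K A B) e1 e2 a ~~ a.
Proof. apply: cS. by exists e1, e2. Qed.

Lemma c_castc {A B} {f g f' g' : hom K A B} (e1 : f = f') (e2 : g = g') (a : cell f g) :
  a ~~ castc (@cell K A B) e1 e2 a.
Proof. by exists e1, e2. Qed.

Lemma castc_eq_c {A B} {f g f' g' : hom K A B} (e1 : f = f') (e2 : g = g') (a : cell f g) b :
  castc (@cell K A B) e1 e2 a = b -> a ~~ b.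
Proof. by exists e1, e2. Qed.

Lemma vC {A B} {f g k f' g' k' : hom K A B} (a : cell f g) (b : cell g k)
  (a' : cell f' g') (b' : cell g' k') : a ~~ a' -> b ~~ b' -> vcomp b a ~~ vcomp b' a'.
Proof.
move=> [e1 [e2 H]] [e3 [e4 H']]. destruct e1, e2, e4.
rewrite (proof_irrelevance _ e3 erefl) in H'. simpl in *. subst. apply cR.
Qed.

Lemma hC {A B C} {f f' f1 f1' : hom K B C} {g g' g1 g1' : hom K A B}
  (a : cell f f') (b : cell g g') (a1 : cell f1 f1') (b1 : cell g1 g1') :
  a ~~ a1 -> b ~~ b1 -> hcomp a b ~~ hcomp a1 b1.
Proof.
move=> [e1 [e2 H]] [e3 [e4 H']]. destruct e1, e2, e3, e4. simpl in *. subst. apply cR.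
Qed.

Lemma id2C {A B} {f f' : hom K A B} : f = f' -> id2 f ~~ id2 f'.
Proof. move=> e. destruct e. apply cR. Qed.

Lemma wlC {A B C} (h : hom K B C) {f f' f1 f1' : hom K A B} (a : cell f f') (a1 : cell f1 f1') :
  a ~~ a1 -> wl h a ~~ wl h a1.
Proof. move=> H. apply: hC => //. apply cR. Qed.

Lemma wrC {A B C} {f f' f1 f1' : hom K B C} (a : cell f f') (a1 : cell f1 f1') (g : hom K A B) :
  a ~~ a1 -> wr a g ~~ wr a1 g.
Proof. move=> H. apply: hC => //. apply cR. Qed.

Lemma wr_j {A B C} {f f' : hom K B C} (a : cell f f') (g g' : hom K A B) :
  g = g' -> wr a g ~~ wr a g'.
Proof. move=> e. destruct e. apply cR. Qed.

Lemma wl_h {A B C} (h h' : hom K B C) {f f' : hom K A B} (a : cell f f') :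
  h = h' -> wl h a ~~ wl h' a.
Proof. move=> e. destruct e. apply cR. Qed.

Lemma castc_bij {A B} {f g f' g' : hom K A B} (e1 : f = f') (e2 : g = g') :
  bijective (castc (@cell K A B) e1 e2).
Proof.
exists (castc (@cell K A B) (esym e1) (esym e2)); move=> x; by destruct e1, e2.
Qed.

Arguments cS {A B f g f' g'} {a b}.
Arguments cT {A B f g f' g' f'' g''} {a b c}.
Arguments vC {A B f g k f' g' k'} {a b a' b'}.
Arguments hC {A B C f f' f1 f1' g g' g1 g1'} {a b a1 b1}.
Arguments wlC {A B C} h {f f' f1 f1'} {a a1}.
Arguments wrC {A B C f f' f1 f1'} {a a1} g.
Context (HK : is_2cat K).

Lemma vA {A B} {f g k l : hom K A B} (c : cell k l) (b : cell g k) (a : cell f g) :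
  vcomp c (vcomp b a) = vcomp (vcomp c b) a.
Proof. by case: HK => H _; apply H. Qed.
Lemma v1l {A B} {f g : hom K A B} (a : cell f g) : vcomp (id2 g) a = a.
Proof. by case: HK => _ [H _]; apply H. Qed.
Lemma v1r {A B} {f g : hom K A B} (a : cell f g) : vcomp a (id2 f) = a.
Proof. by case: HK => _ [_ [H _]]; apply H. Qed.
Lemma hid {A B C} (f : hom K B C) (g : hom K A B) : hcomp (id2 f) (id2 g) = id2 (comp1 f g).
Proof. by case: HK => _ [_ [_ [H _]]]; apply H. Qed.
Lemma hv {A B C} {f f' f'' : hom K B C} {g g' g'' : hom K A B}
      (a : cell f f') (a' : cell f' f'') (b : cell g g') (b' : cell g' g'') :
      hcomp (vcomp a' a) (vcomp b' b) = vcomp (hcomp a' b') (hcomp a b).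
Proof. by case: HK => _ [_ [_ [_ [H _]]]]; apply H. Qed.
Lemma hA {A B C D} {h h' : hom K C D} {g g' : hom K B C} {f f' : hom K A B}
      (c : cell h h') (b : cell g g') (a : cell f f') :
      hcomp c (hcomp b a) ~~ hcomp (hcomp c b) a.
Proof. case: HK => _ [_ [_ [_ [_ [H _]]]]]. eapply castc_eq_c; apply H. Qed.
Lemma hidl {A B} {f f' : hom K A B} (a : cell f f') : hcomp (id2 (id1 B)) a ~~ a.
Proof. case: HK => _ [_ [_ [_ [_ [_ [H _]]]]]]. eapply castc_eq_c; apply H. Qed.
Lemma hidr {A B} {f f' : hom K A B} (a : cell f f') : hcomp a (id2 (id1 A)) ~~ a.
Proof. case: HK => _ [_ [_ [_ [_ [_ [_ H]]]]]]. eapply castc_eq_c; apply H. Qed.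

Lemma wlv {A B C} (h : hom K B C) {f g k : hom K A B} (b : cell g k) (a : cell f g) :
  wl h (vcomp b a) = vcomp (wl h b) (wl h a).
Proof. by rewrite /wl -hv v1l. Qed.
Lemma wrv {A B C} {f g k : hom K B C} (b : cell g k) (a : cell f g) (j : hom K A B) :
  wr (vcomp b a) j = vcomp (wr b j) (wr a j).
Proof. by rewrite /wr -hv v1l. Qed.
Lemma wl_id2 {A B C} (h : hom K B C) (f : hom K A B) : wl h (id2 f) = id2 (comp1 h f).
Proof. exact: hid. Qed.
Lemma wr_id2 {A B C} (h : hom K B C) (f : hom K A B) : wr (id2 h) f = id2 (comp1 h f).
Proof. exact: hid. Qed.
Lemma xch {A B C} {k k' : hom K B C} {g g' : hom K A B} (a : cell k k') (b : cell g g') :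
  vcomp (wl k' b) (wr a g) = vcomp (wr a g') (wl k b).
Proof.
rewrite /wl /wr -!hv.
by rewrite v1l v1r v1l v1r.
Qed.
Lemma wl_wl {A B C D} (h : hom K C D) (k : hom K B C) {f f' : hom K A B} (a : cell f f') :
  wl h (wl k a) ~~ wl (comp1 h k) a.
Proof. rewrite /wl. apply: cT (hA _ _ _) _. rewrite hid. apply cR. Qed.
Lemma wr_wr {A B C D} {h h' : hom K C D} (a : cell h h') (g : hom K B C) (j : hom K A B) :
  wr (wr a g) j ~~ wr a (comp1 g j).
Proof. rewrite /wr. apply: cT (cS (hA _ _ _)) _. rewrite hid. apply cR. Qed.
Lemma wl_wr {A B C D} (h : hom K C D) {g g' : hom K B C} (a : cell g g') (j : hom K A B) :
  wl h (wr a j) ~~ wr (wl h a) j.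
Proof. rewrite /wl /wr. apply: hA. Qed.
Lemma wl_1 {A B} {f f' : hom K A B} (a : cell f f') : wl (id1 B) a ~~ a.
Proof. exact: hidl. Qed.
Lemma wr_1 {A B} {f f' : hom K A B} (a : cell f f') : wr a (id1 A) ~~ a.
Proof. exact: hidr. Qed.


Lemma bij_post {X Y Z : Type} (L : Y -> Z) (M : X -> Y) :
  bijective L -> bijective (L \o M) -> bijective M.
Proof.
move=> [Li LK KL] HLM.
apply: (eq_bij (bij_comp (f := Li) _ HLM)); first by exists L.
by move=> x /=; rewrite LK.
Qed.

Lemma bij_pre {X Y Z : Type} (T : X -> Y) (N : Y -> Z) :
  bijective T -> bijective (N \o T) -> bijective N.
Proof.
move=> [Ti TK KT] HNT.
apply: (eq_bij (bij_comp HNT (h := Ti) _)); first by exists T.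
by move=> x /=; rewrite KT.
Qed.

Lemma bij_id {X : Type} : bijective (@id X).
Proof. by exists id. Qed.

Lemma sq {X X' Y Y' : Type} {A B} {a b a' b' : hom K A B} (M : X -> Y) (N : X' -> Y')
  (T : X -> X') (L : Y -> cell a b) (E : Y' -> cell a' b') :
  a = a' -> b = b' -> bijective T -> bijective L -> bijective E ->
  (forall x, L (M x) ~~ E (N (T x))) -> (bijective M <-> bijective N).
Proof.
move=> e1 e2. destruct e1, e2. move=> bT bL bE H.
have HH : forall x, L (M x) = E (N (T x)) by move=> x; apply: c_eq.
split=> bij.
- apply: (bij_pre _ _ bT). apply: (bij_post _ _ bE).
  apply: (eq_bij (bij_comp bL bij)) => x /=. by rewrite HH.
- apply: (bij_post _ _ bL). apply: (eq_bij (bij_comp bE (bij_comp bij bT))) => x /=. by rewrite HH.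
Qed.

Lemma abs_lift {A B C} (f : hom K A C) (h : hom K B C) (g : hom K A B)
  (phi : cell f (comp1 h g)) : is_abs_left_lifting f h g phi -> is_left_lifting f h g phi.
Proof.
move=> H k.
have HN := H A (id1 A) (comp1 k (id1 A)).
refine (proj2 (sq _ _ (castc (@cell K A B) (esym (comp1_idr g)) (esym (comp1_idr k))) id id
          (esym (comp1_idr f)) (f_equal (comp1 h) (esym (comp1_idr k)))
          (castc_bij _ _) bij_id bij_id _) HN).
move=> x; rewrite /id. apply: cS. apply: vC.
- apply: cT (castc_c _ _ _) (wr_1 _).
- apply: wlC. apply: castc_c.
Qed.

Lemma pw_ext (HFC : finitely_complete K) {A B C} (f : hom K A C) (g : hom K A B) (h : hom K B C)
  (phi : cell f (comp1 h g)) : is_pointwise_left_ext f g h phi -> is_left_ext f g h phi.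
Proof.
move=> Hpw k.
case: HFC => _ [_ Hcomma].
case: (Hcomma _ _ _ g (id1 B)) => P [p [q [lam Hc]]].
have HE := Hpw B (id1 B) P p q lam Hc k.
case: (Hc) => H1 _.
case: (H1 A (id1 A) g (castc (@cell K A B) (esym (comp1_idr g)) (esym (comp1_idl g)) (id2 g)))
  => m [[e1 [e2 Hm]] _].
have Hlm : wr lam m ~~ id2 g.
  apply: cT (c_castc (esym (comp1A _ _ _)) (esym (comp1A _ _ _)) _) _.
  rewrite -/(comma_at g (id1 B) p q lam m).
  apply: cT (castc_eq_c _ _ _ _ Hm) _. apply: castc_c.
set G := fun alpha : cell f (comp1 k g) =>
  vcomp (castc (@cell K P C) erefl (f_equal (comp1 k) (comp1_idl q)) (wl k lam))
        (castc (@cell K P C) erefl (esym (comp1A k g p)) (wr alpha p)).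
have Ginj : forall a1 a2, G a1 = G a2 -> a1 = a2.
  have R : forall a, wr (G a) m ~~ a.
    move=> a. rewrite /G wrv.
    apply: (cT _ (eq_c _ _ (v1l a))).
    apply: vC.
    + apply: cT (wrC _ (castc_c _ _ _)) _.
      apply: cT (wr_wr _ _ _) _. apply: cT (wr_j _ _ _ e1) _. apply: wr_1.
    + apply: cT (wrC _ (castc_c _ _ _)) _.
      apply: cT (cS (wl_wr _ _ _)) _.
      apply: cT (wlC _ Hlm) _. rewrite wl_id2. apply: cR.
  move=> a1 a2 Ha. apply: c_eq. apply: cT (cS (R a1)) _. rewrite Ha. apply: R.
set M := fun kappa : cell h k => vcomp (wr kappa g) phi.
set T := castc (@cell K B C) (esym (comp1_idr h)) (erefl k).
have HGM : forall kappa, G (M kappa) = vcomp (wr (T kappa) q)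
      (castc (@cell K P C) erefl (comp1A h (id1 B) q)
         (vcomp (wl h lam) (castc (@cell K P C) erefl (esym (comp1A h g p)) (wr phi p)))).
  move=> kappa. apply: c_eq.
  apply: (cTm _ (vcomp (vcomp (wr kappa (comp1 (id1 B) q)) (wl h lam))
           (castc (@cell K P C) erefl (esym (comp1A h g p)) (wr phi p)))).
  - rewrite -xch -vA /G /M. apply: vC.
    + rewrite wrv. apply: cT (castc_c _ _ _) _. apply: vC.
      * apply: c_castc.
      * apply: wr_wr.
    + apply: castc_c.
  - rewrite -vA. apply: vC.
    + apply: c_castc.
    + apply: cS. apply: (cTm _ (wr (wr kappa (id1 B)) q)); last by apply: wr_wr.
      apply: wrC. apply: cT (castc_c _ _ _) (cS (wr_1 _)).
have bET := bij_comp HE (castc_bij (esym (comp1_idr h)) (erefl k)).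
case: bET => S SK KS.
exists (S \o G).
- move=> kappa /=. rewrite HGM. exact: (SK kappa).
- move=> a /=. apply: Ginj. rewrite HGM. exact: (KS (G a)).
Qed.

End Basics.
Arguments cS {K A B f g f' g'} {a b}.
Arguments cT {K A B f g f' g' f'' g''} {a b c}.
Arguments vC {K A B f g k f' g' k'} {a b a' b'}.
Arguments hC {K A B C f f' f1 f1' g g' g1 g1'} {a b a1 b1}.
Arguments wlC {K A B C} h {f f' f1 f1'} {a a1}.
Arguments wrC {K A B C f f' f1 f1'} {a a1} g.

Section Main.
Context (K : TwoCatData) (HK : is_2cat K) (HFC : finitely_complete K)
  (Y : YonedaData K) (HY : is_good_yoneda Y)
  (A B C : ob K) (hA : adm Y (id1 A))
  (f : hom K A C) (hf : adm Y f) (g : hom K A B) (hg : adm Y g)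
  (h : hom K B C) (phi : cell f (comp1 h g))
  (phi' : cell (Bf1 Y g hA hg) (comp1 (Bf1 Y f hA hf) h))
  (Hphi' : castc (@cell K A (Pre Y A)) erefl (comp1A (Bf1 Y f hA hf) h g)
             (vcomp (wl (Bf1 Y f hA hf) phi) (chi Y f hA hf))
           = vcomp (wr phi' g) (chi Y g hA hg)).

Local Notation Cf := (Bf1 Y f hA hf).
Local Notation Bg := (Bf1 Y g hA hg).
Local Notation y := (yon Y A).
Local Notation chf := (chi Y f hA hf).
Local Notation chg := (chi Y g hA hg).
Local Infix "~~" := ceq (at level 70).

Lemma chf_abs : is_abs_left_lifting y Cf f chf.
Proof. case: HY => _ [_ [Hi _]]. exact: Hi. Qed.
Lemma chg_abs : is_abs_left_lifting y Bg g chg.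
Proof. case: HY => _ [_ [Hi _]]. exact: Hi. Qed.
Lemma chg_pw : is_pointwise_left_ext y g Bg chg.
Proof. case: HY => _ [_ [_ Hii]]. apply: Hii => //. exact: chg_abs. Qed.
Lemma chg_ext : is_left_ext y g Bg chg.
Proof. apply: pw_ext => //. exact: chg_pw. Qed.
Lemma chf_lift : is_left_lifting y Cf f chf.
Proof. apply: abs_lift => //. exact: chf_abs. Qed.
Lemma Hpsi : vcomp (wl Cf phi) chf ~~ vcomp (wr phi' g) chg.
Proof. exact: castc_eq_c _ _ _ _ Hphi'. Qed.

Lemma part1 : is_left_ext f g h phi <-> is_left_lifting Bg Cf h phi'.
Proof.
split=> H k.
- refine (proj1 (sq (fun kappa : cell h k => vcomp (wr kappa g) phi)
     (fun kappa : cell h k => vcomp (wl Cf kappa) phi') id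
     (fun beta : cell f (comp1 k g) => vcomp (wl Cf beta) chf)
     (fun theta : cell Bg (comp1 Cf k) => vcomp (wr theta g) chg)
     erefl (comp1A Cf k g) bij_id (chf_lift (comp1 k g)) (chg_ext (comp1 Cf k)) _) (H k)).
  move=> kappa. rewrite /id; cbv beta. rewrite (wlv HK) (wrv HK) -!(vA HK). apply: vC.
  + exact: Hpsi.
  + exact (wl_wr HK Cf kappa g).
- refine (proj2 (sq (fun kappa : cell h k => vcomp (wr kappa g) phi)
     (fun kappa : cell h k => vcomp (wl Cf kappa) phi') id
     (fun beta : cell f (comp1 k g) => vcomp (wl Cf beta) chf)
     (fun theta : cell Bg (comp1 Cf k) => vcomp (wr theta g) chg)
     erefl (comp1A Cf k g) bij_id (chf_lift (comp1 k g)) (chg_ext (comp1 Cf k)) _) (H k)).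
  move=> kappa. rewrite /id; cbv beta. rewrite (wlv HK) (wrv HK) -!(vA HK). apply: vC.
  + exact: Hpsi.
  + exact (wl_wr HK Cf kappa g).
Qed.


Lemma key2 X (c : hom K X B) P (p : hom K P A) (q : hom K P X)
  (lam : cell (comp1 g p) (comp1 c q)) (Hc : is_comma g c p q lam) (k : hom K X C) :
  bijective (fun kappa : cell (comp1 h c) k => vcomp (wr kappa q)
     (castc (@cell K P C) erefl (comp1A h c q)
        (vcomp (wl h lam) (castc (@cell K P C) erefl (esym (comp1A h g p)) (wr phi p)))))
  <-> bijective (fun kappa : cell (comp1 h c) k => vcomp (wl Cf kappa)
     (castc (@cell K X (Pre Y A)) erefl (esym (comp1A Cf h c)) (wr phi' c))).
Proof.
apply: (sq _ _ id _ _ erefl (comp1A Cf k q) bij_id (chf_abs P p (comp1 k q))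
          (chg_pw X c P p q lam Hc (comp1 Cf k))).
move=> kappa; rewrite /id; cbv beta.
rewrite (wlv HK) (wrv HK) -!(vA HK). apply: vC; last first.
  exact (wl_wr HK Cf kappa q).
apply: (cTm _ (vcomp (wl (comp1 Cf h) lam) (vcomp (wr phi' (comp1 g p))
   (castc (@cell K P (Pre Y A)) erefl (esym (comp1A Bg g p)) (wr chg p))))).
- apply: (cTm _ (vcomp (wl Cf (wl h lam)) (vcomp (wl Cf (castc (@cell K P C) erefl (esym (comp1A h g p)) (wr phi p)))
     (castc (@cell K P (Pre Y A)) erefl (esym (comp1A Cf f p)) (wr chf p))))).
  + rewrite (vA HK) -(wlv HK). apply: vC; first by apply: cR.
    apply: wlC. apply: castc_c.
  + apply: vC.
    * apply: (cTm _ (wr (vcomp (wl Cf phi) chf) p)).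
      -- rewrite (wrv HK). apply: vC; first by apply: castc_c.
         apply: cT (wlC _ (castc_c _ _ _)) _. exact (wl_wr HK Cf phi p).
      -- apply: (cT (wrC p Hpsi)). rewrite (wrv HK). apply: vC; first by apply: c_castc.
         exact (wr_wr HK phi' g p).
    * exact (wl_wl HK Cf h lam).
- apply: cS.
  apply: (cTm _ (vcomp (wr phi' (comp1 c q)) (vcomp (wl Bg lam)
     (castc (@cell K P (Pre Y A)) erefl (esym (comp1A Bg g p)) (wr chg p))))).
  + apply: vC; first by apply: castc_c.
    apply: (cT (wrC q (castc_c _ _ _))). exact (wr_wr HK phi' c q).
  + rewrite (vA HK) -(xch HK) -(vA HK). apply: cR.
Qed.

Lemma part2 : is_pointwise_left_ext f g h phi <-> is_abs_left_lifting Bg Cf h phi'.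
Proof.
split.
- move=> H D j k. case: HFC => _ [_ Hcomma].
  case: (Hcomma _ _ _ g j) => P [p [q [lam Hc]]].
  exact: (proj1 (key2 D j P p q lam Hc k) (H D j P p q lam Hc k)).
- move=> H X c P p q lam Hc k. exact: (proj2 (key2 X c P p q lam Hc k) (H X c k)).
Qed.

Lemma key3 D (j : hom K D A) (k : hom K D B) (kappa : cell (comp1 g j) k) :
  vcomp (wl Cf (vcomp (wl h kappa) (castc (@cell K D C) erefl (esym (comp1A h g j)) (wr phi j))))
        (castc (@cell K D (Pre Y A)) erefl (esym (comp1A Cf f j)) (wr chf j))
  ~~ vcomp (wl (comp1 Cf h) kappa)
       (castc (@cell K D (Pre Y A)) erefl (esym (comp1A (comp1 Cf h) g j))
          (wr (vcomp (wr phi' g) chg) j)).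
Proof.
rewrite (wlv HK) -(vA HK). apply: vC; last first.
  exact (wl_wl HK Cf h kappa).
apply: (cTm _ (wr (vcomp (wl Cf phi) chf) j)).
- rewrite (wrv HK). apply: vC; first by apply: castc_c.
  apply: cT (wlC _ (castc_c _ _ _)) _. exact (wl_wr HK Cf phi j).
- apply: (cT (wrC j Hpsi)). apply: c_castc.
Qed.

Lemma part3 : is_abs_left_lifting f h g phi <-> is_iso phi'.
Proof.
split.
- move=> H.
  have Habs : is_abs_left_lifting y (comp1 Cf h) g (vcomp (wr phi' g) chg).
    move=> D j k.
    refine (proj1 (sq _ _ id _ (fun x => x) (erefl (comp1 y j)) (comp1A Cf h k) bij_id
                    (chf_abs D j (comp1 h k)) bij_id _) (H D j k)).
    move=> kappa; rewrite /id; cbv beta. exact: key3.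
  case: HY => _ [_ [_ Hii]].
  have Hpw := Hii A B g hA hg (comp1 Cf h) _ Habs.
  have E2 := pw_ext HK HFC _ _ _ _ Hpw.
  have E1 := chg_ext.
  case: (E2 Bg) => inv2 c2 c2'.
  have Hs : vcomp (wr (inv2 chg) g) (vcomp (wr phi' g) chg) = chg := c2' chg.
  exists (inv2 chg). split.
  + apply: (bij_inj (E1 Bg)). cbv beta.
    by rewrite (wrv HK) -(vA HK) Hs (wr_id2 HK) (v1l HK).
  + apply: (bij_inj (E2 (comp1 Cf h))). cbv beta.
    by rewrite (wrv HK) -(vA HK) Hs (wr_id2 HK) (v1l HK).
- move=> [s [Hs1 Hs2]] D j k.
  have HN : bijective (fun kappa : cell (comp1 g j) k => vcomp (wr phi' k)
       (vcomp (wl Bg kappa) (castc (@cell K D (Pre Y A)) erefl (esym (comp1A Bg g j)) (wr chg j)))).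
    apply: (eq_bij (bij_comp (f := fun t => vcomp (wr phi' k) t) _ (chg_abs D j k))); last by [].
    exists (fun t => vcomp (wr s k) t) => t;
      by rewrite (vA HK) -(wrv HK) ?Hs1 ?Hs2 (wr_id2 HK) (v1l HK).
  refine (proj2 (sq _ _ id _ (fun x => x) (erefl (comp1 y j)) (comp1A Cf h k) bij_id
                  (chf_abs D j (comp1 h k)) bij_id _) HN).
  move=> kappa; rewrite /id; cbv beta. apply: (cT (key3 D j k kappa)).
  apply: (cTm _ (vcomp (wl (comp1 Cf h) kappa) (vcomp (wr phi' (comp1 g j))
     (castc (@cell K D (Pre Y A)) erefl (esym (comp1A Bg g j)) (wr chg j))))).
  + apply: vC; last by apply: cR.
    apply: (cT (castc_c _ _ _)). rewrite (wrv HK). apply: vC; first by apply: c_castc.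
    exact (wr_wr HK phi' g j).
  + rewrite (vA HK) (xch HK) -(vA HK). apply: cR.
Qed.

End Main.

Theorem lemma3p10 (K : TwoCatData) (HK : is_2cat K) (HFC : finitely_complete K)
  (Y : YonedaData K) (HY : is_good_yoneda Y)
  (A B C : ob K) (hA : adm Y (id1 A))
  (f : hom K A C) (hf : adm Y f) (g : hom K A B) (hg : adm Y g)
  (h : hom K B C) (phi : cell f (comp1 h g))
  (phi' : cell (Bf1 Y g hA hg) (comp1 (Bf1 Y f hA hf) h))
  (Hphi' : castc (@cell K A (Pre Y A)) erefl (comp1A (Bf1 Y f hA hf) h g)
             (vcomp (wl (Bf1 Y f hA hf) phi) (chi Y f hA hf))
           = vcomp (wr phi' g) (chi Y g hA hg)) :
  (is_left_ext f g h phi <-> is_left_lifting (Bf1 Y g hA hg) (Bf1 Y f hA hf) h phi') /\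
  (is_pointwise_left_ext f g h phi <->
     is_abs_left_lifting (Bf1 Y g hA hg) (Bf1 Y f hA hf) h phi') /\
  (is_abs_left_lifting f h g phi <-> is_iso phi').
Proof.
split; [| split].
- by apply: part1.
- by apply: part2.
- by apply: part3.
Qed.
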